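(* Consider the following kinetic transport model. Let $\{Z_k\}_{k\ge1}$ be a Markov chain on the two states $\{\mathrm{F},\mathrm{A}\}$ (''free'' and ''adsorbed'') with initial distribution $\lambda=(\lambda_{\mathrm F},\lambda_{\mathrm A})$ and transition matrix $$\begin{pmatrix} p_{\mathrm F\mathrm F} & p_{\mathrm F\mathrm A}\\ p_{\mathrm A\mathrm F} & p_{\mathrm A\mathrm A}\end{pmatrix}=\begin{pmatrix}1-a & a\\ b & 1-b\end{pmatrix},\qquad a,b\in[0,1].$$ Let $K_n=\sum_{k=1}^n \mathbf 1_{\{Z_k=\mathrm F\}}$ and $f_n(k)=P(K_n=k)$ for $0\le k\le n$. Independently of $\{Z_k\}$, let $(X_k,Y_k)_{k\ge1}$ be i.i.d. random vectors in $\mathbb Z^2$ with $$P((X_k,Y_k)=(j,0))=\alpha,\qquad P((X_k,Y_k)=(0,j))=\beta\qquad (j=\pm1),$$ where $\alpha,\beta\ge0$ and $\alpha+\beta=1/2$. Define $S(0)=(0,0)$ and, for $n\ge1$, $$S(n)=(S_X(n),S_Y(n))=\sum_{k=1}^{K_n}(X_k+1,\,Y_k).$$ Then for $n\ge1$, $0\le x\le 2n$ and $-n\le y\le n$ with $x\equiv y\pmod 2$, $$P(S(n)=(x,y))=\sum_{k=\lceil x/2\rceil}^n f_n(k)\sum_{j=0\vee(x-k)}^{\frac{x+y}{2}\wedge\frac{x-y}{2}}\frac{k!\;\alpha^{2j+k-x}\beta^{x-2j}}{j!\,(j+k-x)!\,((x+y)/2-j)!\,((x-y)/2-j)!},$$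 and $P(S(n)=(x,y))=0$ if $x\not\equiv y\pmod 2$.
   Context: $c\vee d=\max\{c,d\}$, $c\wedge d=\min\{c,d\}$; $\lceil c\rceil$ is the least integer $\ge c$. An empty sum (upper limit smaller than lower limit) is zero. *)

(* Defs.v *)
From HB Require Import structures.
From mathcomp Require Import all_boot all_order all_algebra.
Set Implicit Arguments. Unset Strict Implicit. Unset Printing Implicit Defensive.
Import Order.TTheory GRing.Theory Num.Theory.
Local Open Scope ring_scope.

Section Model.
Variable R : realFieldType.

(* states: true = F (free), false = A (adsorbed) *)
Definition trans (a b : R) (s t : bool) : R :=
  match s, t with
  | true, true => 1 - a
  | true, false => a
  | false, true => b
  | false, false => 1 - b
  end.

Definition init (lamF lamA : R) (s : bool) : R := if s then lamF else lamA.

Fixpoint path_w (a b : R) (s : bool) (z : seq bool) : R :=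
  match z with
  | [::] => 1
  | t :: u => trans a b s t * path_w a b t u
  end.

Definition chain_prob (a b lamF lamA : R) (z : seq bool) : R :=
  match z with
  | [::] => 1
  | s :: u => init lamF lamA s * path_w a b s u
  end.

(* steps (X,Y): 0 -> (1,0), 1 -> (-1,0), 2 -> (0,1), 3 -> (0,-1) *)
Definition stepX (s : 'I_4) : int :=
  match val s with 0%N => 1 | 1%N => -1 | _ => 0 end.
Definition stepY (s : 'I_4) : int :=
  match val s with 2%N => 1 | 3%N => -1 | _ => 0 end.
Definition step_w (alpha beta : R) (s : 'I_4) : R :=
  if (val s < 2)%N then alpha else beta.

Definition Kn (n : nat) (z : n.-tuple bool) : nat := count id z.

Definition SX (n : nat) (z : n.-tuple bool) (w : n.-tuple 'I_4) : int :=
  \sum_(i < n | (i < Kn z)%N) (stepX (tnth w i) + 1).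
Definition SY (n : nat) (z : n.-tuple bool) (w : n.-tuple 'I_4) : int :=
  \sum_(i < n | (i < Kn z)%N) stepY (tnth w i).

Definition weight (a b lamF lamA alpha beta : R) (n : nat)
    (z : n.-tuple bool) (w : n.-tuple 'I_4) : R :=
  chain_prob a b lamF lamA z * \prod_(i < n) step_w alpha beta (tnth w i).

Definition Pr (a b lamF lamA alpha beta : R) (n : nat)
    (E : n.-tuple bool -> n.-tuple 'I_4 -> bool) : R :=
  \sum_(z : n.-tuple bool) \sum_(w : n.-tuple 'I_4)
     (if E z w then weight a b lamF lamA alpha beta z w else 0).

Definition fn (a b lamF lamA alpha beta : R) (n k : nat) : R :=
  @Pr a b lamF lamA alpha beta n (fun z _ => Kn z == k).

Definition PS (a b lamF lamA alpha beta : R) (n : nat) (x y : int) : R :=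
  @Pr a b lamF lamA alpha beta n (fun z w => (SX z w == x) && (SY z w == y)).

(* exclusive upper bound (as nat) for a sum whose inclusive integer upper
   limit is hi : empty if hi < 0 *)
Definition upto (hi : int) : nat := if hi < 0 then 0%N else (absz hi).+1.

Definition rhs_formula (a b lamF lamA alpha beta : R) (n : nat) (x y : int) : R :=
  let xn := absz x in
  let u := ((x + y) %/ 2)%Z in
  let v := ((x - y) %/ 2)%Z in
  \sum_(xn.+1 %/ 2 <= k < n.+1)
    fn a b lamF lamA alpha beta n k *
    \sum_(xn - k <= j < upto (Num.min u v))
      ((k`!)%:R * alpha ^+ (2 * j + k - xn) * beta ^+ (xn - 2 * j)
       / ((j`!)%:R * ((j + k - xn)`!)%:R *
          ((absz (u - j%:Z))`!)%:R * ((absz (v - j%:Z))`!)%:R)).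

End Model.

(* Main.v *)
Require Import Defs.
From HB Require Import structures.
From mathcomp Require Import all_boot all_order all_algebra.
From mathcomp Require Import ring zify.
Set Implicit Arguments. Unset Strict Implicit. Unset Printing Implicit Defensive.
Import Order.TTheory GRing.Theory Num.Theory.
Local Open Scope ring_scope.

Section M.
Variable R : realFieldType.
Variables alpha beta : R.

Definition Mw (i l u d : int) : R :=
  if (0 <= i) && (0 <= l) && (0 <= u) && (0 <= d) then
    ((absz i + absz l + absz u + absz d)`!)%:R /
    (((absz i)`!)%:R * ((absz l)`!)%:R * ((absz u)`!)%:R * ((absz d)`!)%:R) *
    (alpha ^+ (absz i + absz l) * beta ^+ (absz u + absz d))
  else 0.

Lemma fnz (m : nat) : (m`!)%:R != 0 :> R.
Proof. by rewrite pnatr_eq0 -lt0n fact_gt0. Qed.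

Lemma Mw0 i l u d : (i < 0) || (l < 0) || (u < 0) || (d < 0) -> Mw i l u d = 0.
Proof.
move=> h; rewrite /Mw ifF //; apply/negbTE.
by move: h; rewrite !ltNge; case: (0 <= i); case: (0 <= l); case: (0 <= u); case: (0 <= d).
Qed.

Lemma MwN (I L U D : nat) : Mw I L U D =
  ((I + L + U + D)`!)%:R / ((I`!)%:R * (L`!)%:R * (U`!)%:R * (D`!)%:R) *
    (alpha ^+ (I + L) * beta ^+ (U + D)).
Proof. by rewrite /Mw. Qed.

Lemma predS (I : nat) : (I.+1)%:Z - 1 = I%:Z.
Proof. by rewrite -addn1 PoszD addrK. Qed.

Definition qq (K I L U D : nat) : R :=
  (K`!)%:R / ((I`!)%:R * (L`!)%:R * (U`!)%:R * (D`!)%:R).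

Lemma shI I L U D K : (I + L + U + D = K.+1)%N ->
  alpha * Mw (I%:Z - 1) L U D = I%:R * qq K I L U D * (alpha ^+ (I + L) * beta ^+ (U + D)).
Proof.
case: I => [|I] hK.
  by rewrite Mw0 ?mulr0 ?mul0r.
rewrite predS MwN /qq.
have -> : (I + L + U + D = K)%N by lia.
rewrite factS natrM addSn exprS.
have := fnz I; have := fnz L; have := fnz U; have := fnz D.
have : (I.+1)%:R != 0 :> R by rewrite pnatr_eq0.
move=> *; field; by rewrite nat1r; apply/and5P; split.
Qed.


Ltac nzfin := repeat (apply/andP; split); rewrite ?nat1r ?fnz ?pnatr_eq0 //.

Lemma shL I L U D K : (I + L + U + D = K.+1)%N ->
  alpha * Mw I (L%:Z - 1) U D = L%:R * qq K I L U D * (alpha ^+ (I + L) * beta ^+ (U + D)).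
Proof.
case: L => [|L] hK; first by rewrite Mw0 ?mulr0 ?mul0r // orbC.
rewrite predS MwN /qq.
have -> : (I + L + U + D = K)%N by lia.
rewrite factS natrM addnS exprS.
have := fnz I; have := fnz L; have := fnz U; have := fnz D.
move=> *; field; nzfin.
Qed.

Lemma shU I L U D K : (I + L + U + D = K.+1)%N ->
  beta * Mw I L (U%:Z - 1) D = U%:R * qq K I L U D * (alpha ^+ (I + L) * beta ^+ (U + D)).
Proof.
case: U => [|U] hK; first by rewrite Mw0 ?mulr0 ?mul0r // orbC.
rewrite predS MwN /qq.
have -> : (I + L + U + D = K)%N by lia.
rewrite factS natrM addSn exprS.
have := fnz I; have := fnz L; have := fnz U; have := fnz D.
move=> *; field; nzfin.
Qed.

Lemma shD I L U D K : (I + L + U + D = K.+1)%N ->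
  beta * Mw I L U (D%:Z - 1) = D%:R * qq K I L U D * (alpha ^+ (I + L) * beta ^+ (U + D)).
Proof.
case: D => [|D] hK; first by rewrite Mw0 ?mulr0 ?mul0r // orbC.
rewrite predS MwN /qq.
have -> : (I + L + U + D = K)%N by lia.
rewrite factS natrM addnS exprS.
have := fnz I; have := fnz L; have := fnz U; have := fnz D.
move=> *; field; nzfin.
Qed.

Lemma pascalN I L U D K : (I + L + U + D = K.+1)%N ->
  Mw I L U D = alpha * Mw (I%:Z - 1) L U D + alpha * Mw I (L%:Z - 1) U D
     + beta * Mw I L (U%:Z - 1) D + beta * Mw I L U (D%:Z - 1).
Proof.
move=> hK; rewrite (shI hK) (shL hK) (shU hK) (shD hK) MwN hK /qq factS natrM.
rewrite -!mulrDl -!natrD hK.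
have := fnz I; have := fnz L; have := fnz U; have := fnz D.
move=> *; field; nzfin.
Qed.

Lemma pascal (i l u d : int) (k : nat) : i + l + u + d = k.+1%:Z ->
  Mw i l u d = alpha * Mw (i - 1) l u d + alpha * Mw i (l - 1) u d
     + beta * Mw i l (u - 1) d + beta * Mw i l u (d - 1).
Proof.
move=> h.
have [hn|hn] := boolP ((i < 0) || (l < 0) || (u < 0) || (d < 0)).
  rewrite !Mw0 ?mulr0 ?addr0 //; move: hn; lia.
have [I eI] : exists I : nat, i = I by exists (absz i); move: hn; lia.
 subst i.
have [L eL] : exists L : nat, l = L by exists (absz l); move: hn; lia.
 subst l.
have [U eU] : exists U : nat, u = U by exists (absz u); move: hn; lia.
 subst u.
have [D eD] : exists D : nat, d = D by exists (absz d); move: hn; lia.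
 subst d.
apply: (pascalN (K := k)); move: h; lia.
Qed.


Definition E (k : nat) (x y j u : int) : R :=
  if 2 * u + 2 * j - x == y then Mw j (j + k%:Z - x) u (x - 2 * j - u) else 0.

Lemma E_out k x y (j u : int) : (k%:Z < j) || (k%:Z < u) || (j < 0) || (u < 0) ->
  E k x y j u = 0.
Proof. move=> h; rewrite /E; case: ifP => // _; apply: Mw0; move: h; lia. Qed.

Lemma E_rec k x y j u : E k.+1 x y j u = alpha * E k (x - 2) y (j - 1) u + alpha * E k x y j u
   + beta * E k (x - 1) (y - 1) j (u - 1) + beta * E k (x - 1) (y + 1) j u.
Proof.
rewrite /E.
have -> : (2 * u + 2 * (j - 1) - (x - 2) == y) = (2 * u + 2 * j - x == y).
  by apply/idP/idP => /eqP H; apply/eqP; lia.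
have -> : (2 * (u - 1) + 2 * j - (x - 1) == y - 1) = (2 * u + 2 * j - x == y).
  by apply/idP/idP => /eqP H; apply/eqP; lia.
have -> : (2 * u + 2 * j - (x - 1) == y + 1) = (2 * u + 2 * j - x == y).
  by apply/idP/idP => /eqP H; apply/eqP; lia.
case: ifP => _; last by rewrite !mulr0 !addr0.
have -> : j - 1 + k%:Z - (x - 2) = j + k.+1%:Z - x by lia.
have -> : x - 2 - 2 * (j - 1) - u = x - 2 * j - u by lia.
have -> : j + k%:Z - x = j + k.+1%:Z - x - 1 by lia.
have -> : j + k%:Z - (x - 1) = j + k.+1%:Z - x by lia.
have -> : x - 1 - 2 * j - (u - 1) = x - 2 * j - u by lia.
have -> : x - 1 - 2 * j - u = x - 2 * j - u - 1 by lia.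
apply: (pascal (k := k)); lia.
Qed.


Definition F k x y := \sum_(j < k.+1) \sum_(u < k.+1) E k x y (j : nat)%:Z (u : nat)%:Z.

Lemma widen (f : nat -> R) K N : (K <= N)%N -> (forall m, (K <= m)%N -> f m = 0) ->
  \sum_(i < N) f i = \sum_(i < K) f i.
Proof.
move=> hKN hf; rewrite (big_ord_widen N f hKN) [RHS]big_mkcond; apply: eq_bigr => i _.
by case: ltnP => // h; rewrite hf.
Qed.

Lemma F_gen k x y N1 N2 : (k < N1)%N -> (k < N2)%N ->
  \sum_(j < N1) \sum_(u < N2) E k x y (j : nat)%:Z (u : nat)%:Z = F k x y.
Proof.
move=> h1 h2.
rewrite (widen (f := fun j : nat => \sum_(u < N2) E k x y j%:Z (u : nat)%:Z) (K := k.+1)) //.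
  apply: eq_bigr => j _.
  apply: (widen (f := fun u : nat => E k x y (j : nat)%:Z u%:Z)) => // m hm.
  by apply: E_out; lia.
move=> m hm; apply: big1 => u _; apply: E_out.
lia.
Qed.

Lemma F_rec k x y : F k.+1 x y = alpha * F k (x - 2) y + alpha * F k x y
   + beta * F k (x - 1) (y - 1) + beta * F k (x - 1) (y + 1).
Proof.
have h1 : \sum_(j < k.+2) \sum_(u < k.+2) E k (x - 2) y ((j : nat)%:Z - 1) (u : nat)%:Z
          = F k (x - 2) y.
  rewrite big_ord_recl big1 ?add0r; last by move=> u _; apply: E_out; rewrite /= ltrN10 !orbT.
  under eq_bigr => j _ do rewrite lift0 predS.
  by apply: F_gen.
have h3 : \sum_(j < k.+2) \sum_(u < k.+2) E k (x - 1) (y - 1) (j : nat)%:Z ((u : nat)%:Z - 1)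
          = F k (x - 1) (y - 1).
  under eq_bigr => j _ do
    rewrite big_ord_recl [E _ _ _ _ (0 - 1)]E_out ?add0r ?ltrN10 ?orbT //.
  under eq_bigr => j _ do under eq_bigr => u _ do rewrite lift0 predS.
  by apply: F_gen.
rewrite -h1 -h3 -(@F_gen k x y k.+2 k.+2) // -(@F_gen k (x - 1) (y + 1) k.+2 k.+2) //.
rewrite /F !mulr_sumr -!big_split; apply: eq_bigr => j _.
rewrite !mulr_sumr -!big_split; apply: eq_bigr => u _.
exact: E_rec.
Qed.


Lemma F0 x y : F 0 x y = if (x == 0) && (y == 0) then 1 else 0.
Proof.
rewrite /F !big_ord1 /E /=.
have [->|hx] := eqVneq x 0.
  rewrite /=; case: eqP => [<-|hy].
    by rewrite /Mw /= expr0 !mulr1 divr1.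
  by case: eqP => // hy'; case: hy; rewrite hy'.
rewrite /= Mw0; first by case: ifP.
move: hx; lia.
Qed.

Definition Wt n (w : n.-tuple 'I_4) : R := \prod_(i < n) step_w alpha beta (tnth w i).
Definition SXk n k (w : n.-tuple 'I_4) : int := \sum_(i < n | (i < k)%N) (stepX (tnth w i) + 1).
Definition SYk n k (w : n.-tuple 'I_4) : int := \sum_(i < n | (i < k)%N) stepY (tnth w i).
Definition G n k x y := \sum_(w : n.-tuple 'I_4)
   (if (SXk k w == x) && (SYk k w == y) then Wt w else 0).

Lemma sum_tupleS (T : finType) n (f : n.+1.-tuple T -> R) :
  \sum_w f w = \sum_(s : T) \sum_(t : n.-tuple T) f [tuple of s :: t].
Proof.
rewrite pair_big /=.
rewrite (reindex (fun p : T * n.-tuple T => [tuple of p.1 :: p.2])) //=.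
apply: onW_bij; exists (fun w : n.+1.-tuple T => (thead w, [tuple of behead w])).
  by case=> s t /=; rewrite theadE; congr (_, _); apply: val_inj.
by move=> w /=; rewrite [RHS]tuple_eta; apply: val_inj.
Qed.


Lemma sum_steps : \sum_(s : 'I_4) step_w alpha beta s = alpha + alpha + beta + beta.
Proof. by rewrite !big_ord_recl big_ord0 /step_w /= addr0 !addrA. Qed.

Lemma Wt_cons n s (t : n.-tuple 'I_4) : Wt [tuple of s :: t] = step_w alpha beta s * Wt t.
Proof. by rewrite /Wt big_ord_recl tnth0; under eq_bigr => i _ do rewrite tnthS. Qed.

Lemma SXk_cons n k s (t : n.-tuple 'I_4) :
  SXk k.+1 [tuple of s :: t] = (stepX s + 1) + SXk k t.
Proof.
rewrite /SXk big_mkcond big_ord_recl /= tnth0; congr (_ + _).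
by rewrite [RHS]big_mkcond; apply: eq_bigr => i _; rewrite ?lift0 tnthS ?ltnS.
Qed.

Lemma SYk_cons n k s (t : n.-tuple 'I_4) :
  SYk k.+1 [tuple of s :: t] = stepY s + SYk k t.
Proof.
rewrite /SYk big_mkcond big_ord_recl /= tnth0; congr (_ + _).
by rewrite [RHS]big_mkcond; apply: eq_bigr => i _; rewrite ?lift0 tnthS ?ltnS.
Qed.

Lemma Wt_total n (hab : alpha + beta = 1 / 2) : \sum_(w : n.-tuple 'I_4) Wt w = 1.
Proof.
elim: n => [|n IH].
  rewrite (eq_bigr (fun _ => 1)); last by move=> w _; rewrite /Wt big_ord0.
  by rewrite sumr_const card_tuple card_ord expn0.
rewrite sum_tupleS.
under eq_bigr => s _ do under eq_bigr => t _ do rewrite Wt_cons.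
under eq_bigr => s _ do rewrite -mulr_sumr IH mulr1.
rewrite sum_steps.
have -> : alpha + alpha + beta + beta = 2 * (alpha + beta) by ring.
by rewrite hab mulrC divfK // pnatr_eq0.
Qed.

Lemma G0 n x y (hab : alpha + beta = 1 / 2) : G n 0 x y = if (x == 0) && (y == 0) then 1 else 0.
Proof.
rewrite /G.
have h1 : forall w : n.-tuple 'I_4, SXk 0 w = 0 by move=> w; apply: big_pred0 => i; exact: ltn0.
have h2 : forall w : n.-tuple 'I_4, SYk 0 w = 0 by move=> w; apply: big_pred0 => i; exact: ltn0.
under eq_bigr => w _ do rewrite h1 h2 [0 == x]eq_sym [0 == y]eq_sym.
case: ifP => _; last by rewrite big1.
exact: Wt_total.
Qed.

Lemma G_rec n k x y : G n.+1 k.+1 x y =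
  \sum_(s : 'I_4) step_w alpha beta s * G n k (x - (stepX s + 1)) (y - stepY s).
Proof.
rewrite /G sum_tupleS; apply: eq_bigr => s _; rewrite mulr_sumr; apply: eq_bigr => t _.
rewrite SXk_cons SYk_cons Wt_cons.
have -> : (stepX s + 1 + SXk k t == x) = (SXk k t == x - (stepX s + 1)).
  by apply/eqP/eqP; lia.
have -> : (stepY s + SYk k t == y) = (SYk k t == y - stepY s).
  by apply/eqP/eqP; lia.
by case: ifP; rewrite ?mulr0.
Qed.

Lemma G_F (hab : alpha + beta = 1 / 2) n k x y : (k <= n)%N -> G n k x y = F k x y.
Proof.
elim: n k x y => [|n IH] [|k] x y // hk.
- by rewrite G0 // F0.
- by rewrite G0 // F0.
rewrite G_rec !big_ord_recl big_ord0 addr0 /step_w /stepX /stepY /=.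
rewrite !IH // F_rec !addrA addr0.
have -> : x - (1 + 1) = x - 2 by lia.
by congr (_ + _ + _ + _); congr (_ * F k _ _); lia.
Qed.


Lemma Mw_nz i l u d : Mw i l u d != 0 -> (0 <= i) && (0 <= l) && (0 <= u) && (0 <= d).
Proof.
move=> h; apply/negPn/negP => hn; move/eqP: h; apply; apply: Mw0.
by move: hn; rewrite !ltNge; case: (0 <= i); case: (0 <= l); case: (0 <= u); case: (0 <= d).
Qed.

Lemma F_Mw k x y u0 v0 : x + y = 2 * u0 -> x = u0 + v0 ->
  F k x y = \sum_(j < k.+1) Mw (j : nat)%:Z ((j : nat)%:Z + k%:Z - x) (u0 - (j : nat)%:Z) (v0 - (j : nat)%:Z).
Proof.
move=> h1 h2; rewrite /F; apply: eq_bigr => j _.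
set M := Mw _ _ _ _.
have hE : forall u : 'I_k.+1, E k x y (j : nat)%:Z (u : nat)%:Z =
    if (u : nat)%:Z == u0 - (j : nat)%:Z then M else 0.
  move=> u; rewrite /E.
  have -> : (2 * (u : nat)%:Z + 2 * (j : nat)%:Z - x == y) = ((u : nat)%:Z == u0 - (j : nat)%:Z).
    by apply/eqP/eqP; lia.
  by case: eqP => // hu; rewrite /M; congr Mw; lia.
under eq_bigr => u _ do rewrite hE.
have [M0|Mn0] := eqVneq M 0.
  by rewrite M0; apply: big1 => u _; case: ifP.
have := Mw_nz Mn0 => hpos.
have hU : (absz (u0 - (j : nat)%:Z) < k.+1)%N by move: hpos; lia.
rewrite (bigD1 (Ordinal hU)) //= ifT; last by apply/eqP; move: hpos; lia.
rewrite big1 ?addr0 // => u hu; case: eqP => // hu'; case/eqP: hu; apply: val_inj => /=.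
by move: hpos hu'; lia.
Qed.


Lemma term_Mw k (X : nat) u0 v0 (j : nat) : X%:Z = u0 + v0 ->
 (if (X - k <= j)%N && (j < upto (Num.min u0 v0))%N then
   (k`!)%:R * alpha ^+ (2 * j + k - X) * beta ^+ (X - 2 * j)
       / ((j`!)%:R * ((j + k - X)`!)%:R *
          ((absz (u0 - j%:Z))`!)%:R * ((absz (v0 - j%:Z))`!)%:R)
  else 0) = Mw j%:Z (j%:Z + k%:Z - X%:Z) (u0 - j%:Z) (v0 - j%:Z).
Proof.
move=> h2; rewrite /upto.
set m := Num.min u0 v0.
have hm : (m = u0 /\ u0 <= v0) \/ (m = v0 /\ v0 <= u0).
  by rewrite /m /Num.min; case: ltP => h; [left | right]; split => //; apply: ltW.
clearbody m.
case: ifP => hc.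
  rewrite /Mw ifT; last by move: hc; case: ifP => ? hc; lia.
  have e1 : absz ((j%:Z + k%:Z - X%:Z)%R) = (j + k - X)%N by move: hc; case: ifP => ? hc; lia.
  have e4 : (j + (j + k - X) + absz (u0 - j%:Z) + absz (v0 - j%:Z) = k)%N.
    by move: hc; case: ifP => ? hc; lia.
  have e2 : (j + (j + k - X) = 2 * j + k - X)%N by move: hc; case: ifP => ? hc; lia.
  have e3 : (absz (u0 - j%:Z) + absz (v0 - j%:Z) = X - 2 * j)%N.
    by move: hc; case: ifP => ? hc; lia.
  by rewrite /= e1 e4 e2 e3; ring.
by apply/esym/Mw0; move: hc; case: ifP => ? hc; lia.
Qed.


Lemma inner_F k (X : nat) y u0 v0 : X%:Z + y = 2 * u0 -> X%:Z = u0 + v0 ->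
  \sum_(X - k <= j < upto (Num.min u0 v0))
      ((k`!)%:R * alpha ^+ (2 * j + k - X) * beta ^+ (X - 2 * j)
       / ((j`!)%:R * ((j + k - X)`!)%:R *
          ((absz (u0 - j%:Z))`!)%:R * ((absz (v0 - j%:Z))`!)%:R)) = F k X y.
Proof.
move=> h1 h2; rewrite (F_Mw _ h1 h2).
set b := upto _.
rewrite (big_nat_widen _ _ (maxn k.+1 b)); last exact: leq_maxr.
rewrite (big_nat_widenl _ 0) // big_mkord.
rewrite -(@widen (fun j : nat => Mw j%:Z (j%:Z + k%:Z - X%:Z) (u0 - j%:Z) (v0 - j%:Z))
            k.+1 (maxn k.+1 b) (leq_maxl _ _)); last first.
  move=> j hj; apply/eqP/negPn/negP => /Mw_nz; lia.
rewrite big_mkcond; apply: eq_bigr => j _ /=.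
rewrite -(term_Mw _ _ h2) -/b.
by rewrite andbC.
Qed.


Lemma F_odd k x y : ~~ (2 %| x - y)%Z -> F k x y = 0.
Proof.
move=> hd; apply: big1 => j _; apply: big1 => u _; rewrite /E; case: ifP => // /eqP h.
by case/negP: hd; apply/dvdzP; exists ((u : nat)%:Z + (j : nat)%:Z - y); lia.
Qed.

Lemma F_low k (X : nat) y : (k < X.+1 %/ 2)%N -> (2 %| X%:Z - y)%Z -> F k X y = 0.
Proof.
move=> hk /dvdzP [q hq].
have hk' : (k.+1 * 2 <= X.+1)%N by rewrite -leq_divRL.
rewrite (@F_Mw k X y (q + y) q); [|lia|lia].
apply: big1 => j _; apply/eqP/negPn/negP => /Mw_nz; lia.
Qed.

Section Outer.
Variables (a b lF lA : R) (n : nat).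
Hypothesis hab : alpha + beta = 1 / 2.

Lemma PS_G x y : PS a b lF lA alpha beta n x y =
  \sum_(z : n.-tuple bool) chain_prob a b lF lA z * G n (Kn z) x y.
Proof.
rewrite /PS /Pr; apply: eq_bigr => z _; rewrite /G mulr_sumr; apply: eq_bigr => w _.
by rewrite /weight /SX /SY /SXk /SYk /Wt; case: ifP; rewrite ?mulr0.
Qed.

Lemma fn_E k : fn a b lF lA alpha beta n k =
  \sum_(z : n.-tuple bool) (if Kn z == k then chain_prob a b lF lA z else 0).
Proof.
rewrite /fn /Pr; apply: eq_bigr => z _; case: ifP => _; last by rewrite big1.
by rewrite -[RHS]mulr1 -(Wt_total n hab) mulr_sumr.
Qed.

Lemma Kn_le (z : n.-tuple bool) : (Kn z <= n)%N.
Proof. by rewrite /Kn -{2}(size_tuple z) count_size. Qed.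

Lemma sum_K (H : nat -> R) : \sum_(z : n.-tuple bool) chain_prob a b lF lA z * H (Kn z) =
   \sum_(0 <= k < n.+1) fn a b lF lA alpha beta n k * H k.
Proof.
under [RHS]eq_bigr => k _ do rewrite fn_E mulr_suml.
rewrite exchange_big /=; apply: eq_bigr => z _.
under eq_bigr => k _ do rewrite (fun_if (fun t => t * H k)) mul0r.
rewrite big_mkord.
have hK : (Kn z < n.+1)%N by rewrite ltnS Kn_le.
rewrite (bigD1 (Ordinal hK)) //= eqxx big1 ?addr0 // => k hk.
case: eqP => // he; case/eqP: hk; exact: val_inj.
Qed.

End Outer.

End M.

Unset Implicit Arguments.
Set Strict Implicit.

Theorem proposition1 (R : realFieldType) (a b lamF lamA alpha beta : R)
  (ha : 0 <= a <= 1) (hb : 0 <= b <= 1)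
  (hlF : 0 <= lamF) (hlA : 0 <= lamA) (hl : lamF + lamA = 1)
  (hal : 0 <= alpha) (hbe : 0 <= beta) (hab : alpha + beta = 1 / 2)
  (n : nat) (hn : (1 <= n)%N) :
  (forall x y : int, 0 <= x <= 2 * n%:Z -> - n%:Z <= y <= n%:Z ->
     (2 %| x - y)%Z ->
     PS a b lamF lamA alpha beta n x y = rhs_formula a b lamF lamA alpha beta n x y) /\
  (forall x y : int, ~~ (2 %| x - y)%Z ->
     PS a b lamF lamA alpha beta n x y = 0).
Proof.
split; last first.
  move=> x y hd; rewrite PS_G; apply: big1 => z _.
  by rewrite G_F ?Kn_le // F_odd ?mulr0.
move=> x y /andP [hx0 hx1] hy hd.
have [X eX] : exists X : nat, x = X%:Z by exists (absz x); lia.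
subst x.
rewrite PS_G.
under eq_bigr => z _ do rewrite G_F ?Kn_le //.
rewrite (sum_K _ _ _ _ _ hab (fun k => F alpha beta k X y)).
rewrite /rhs_formula /=.
have hd' := hd; move/dvdzP: hd' => [q hq].
have eu : ((X%:Z + y) %/ 2)%Z = q + y.
  by rewrite (_ : X%:Z + y = (q + y) * 2) ?mulzK //; lia.
have ev : ((X%:Z - y) %/ 2)%Z = q.
  by rewrite hq mulzK.
rewrite eu ev.
have h1 : X%:Z + y = 2 * (q + y) by lia.
have h2 : X%:Z = (q + y) + q by lia.
under [RHS]eq_bigr => k _ do rewrite (@inner_F _ alpha beta k X y _ _ h1 h2).
have hc : (X.+1 %/ 2 <= n.+1)%N.
  by rewrite -ltnS ltn_divLR //; move: hx1; lia.
rewrite (big_cat_nat (leq0n (X.+1 %/ 2)) hc) /= big1_seq ?add0r //.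
move=> k /andP [_]; rewrite mem_index_iota => /andP [_ hk].
by rewrite F_low ?mulr0.
Qed.
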